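(* Let $f:\Omega_D\to\mathbb{O}$ be a slice function of class $C^1$. Then $f'_s(x)=\frac16\,\mathrm{Im}(x)^{-1}\big(\Gamma(f)(x)\big)$ for every $x\in\Omega_D\setminus\mathbb{R}$.
   Context: Octonions $\mathbb{O}=\mathbb{H}+\ell\mathbb{H}$ with product $(a+\ell b)(c+\ell d)=(ac-d\bar b)+\ell(\bar a d+cb)$, conjugation $\overline{a+\ell b}=\bar a-\ell b$; real basis $(1,e_1,\dots,e_7)=(1,i,j,k,\ell,\ell i,\ell j,\ell k)$, $x=x_0+\sum_{h=1}^7x_he_h$, $\mathrm{Im}(x)=\sum_{h=1}^7x_he_h$. $\mathbb{S}=\{I\in\mathbb{O}:I^2=-1\}$. $D\subset\mathbb{R}^2$ non-empty open, invariant under $(\alpha,\beta)\mapsto(\alpha,-\beta)$, $\Omega_D=\{\alpha+\beta I:(\alpha,\beta)\in D,I\in\mathbb{S}\}$, assumed connected. A slice function $f$ is one of the form $f(\alpha+\beta I)=F_1(\alpha,\beta)+IF_2(\alpha,\beta)$ for a (unique) stem function $(F_1,F_2):D\to\mathbb{O}^2$, $F_1$ even and $F_2$ odd in $\beta$. The spherical derivative is $f'_s:\Omega_D\setminus\mathbb{R}\to\mathbb{O}$, $f'_s(\alpha+\beta I)=F_2(\alpha,\beta)/\beta$. For $m<n$ in $\{1,\dots,7\}$, $L_{mn}=x_m\frac{\partial}{\partial x_n}-x_n\frac{\partial}{\partial x_m}$, and the spherical Dirac operator on $C^1$ functions is $\Gamma(f)(x)=-\sum_{1\le m<n\le7}e_m\big(e_n\,L_{mn}(f)(x)\big)$.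 *)

(* Defs.v *)
From Stdlib Require Import Reals.
From Coquelicot Require Import Coquelicot.
Open Scope R_scope.

(* Quaternions a = q0 + q1 i + q2 j + q3 k *)
Record quat := Quat { q0 : R; q1 : R; q2 : R; q3 : R }.

Definition qadd (a b : quat) : quat :=
  Quat (q0 a + q0 b) (q1 a + q1 b) (q2 a + q2 b) (q3 a + q3 b).
Definition qopp (a : quat) : quat := Quat (- q0 a) (- q1 a) (- q2 a) (- q3 a).
Definition qconj (a : quat) : quat := Quat (q0 a) (- q1 a) (- q2 a) (- q3 a).
(* Hamilton product, i j = k, j k = i, k i = j *)
Definition qmul (a b : quat) : quat :=
  Quat (q0 a * q0 b - q1 a * q1 b - q2 a * q2 b - q3 a * q3 b)
       (q0 a * q1 b + q1 a * q0 b + q2 a * q3 b - q3 a * q2 b)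
       (q0 a * q2 b - q1 a * q3 b + q2 a * q0 b + q3 a * q1 b)
       (q0 a * q3 b + q1 a * q2 b - q2 a * q1 b + q3 a * q0 b).

(* Octonions O = H + l H : x = oa x + l (ob x) *)
Record oct := Oct { oa : quat; ob : quat }.

Definition oadd (x y : oct) : oct := Oct (qadd (oa x) (oa y)) (qadd (ob x) (ob y)).
Definition oopp (x : oct) : oct := Oct (qopp (oa x)) (qopp (ob x)).
Definition osub (x y : oct) : oct := oadd x (oopp y).
(* (a + l b)(c + l d) = (ac - d conj(b)) + l (conj(a) d + c b) *)
Definition omul (x y : oct) : oct :=
  Oct (qadd (qmul (oa x) (oa y)) (qopp (qmul (ob y) (qconj (ob x)))))
      (qadd (qmul (qconj (oa x)) (ob y)) (qmul (oa y) (ob x))).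
Definition oconj (x : oct) : oct := Oct (qconj (oa x)) (qopp (ob x)).

(* real coordinates w.r.t. (1,i,j,k,l,li,lj,lk) *)
Definition mkoct (x0 x1 x2 x3 x4 x5 x6 x7 : R) : oct :=
  Oct (Quat x0 x1 x2 x3) (Quat x4 x5 x6 x7).
Definition coord (x : oct) (h : nat) : R :=
  match h with
  | 0%nat => q0 (oa x) | 1%nat => q1 (oa x) | 2%nat => q2 (oa x) | 3%nat => q3 (oa x)
  | 4%nat => q0 (ob x) | 5%nat => q1 (ob x) | 6%nat => q2 (ob x) | 7%nat => q3 (ob x)
  | _ => 0
  end.
Definition of_coords (c : nat -> R) : oct :=
  mkoct (c 0%nat) (c 1%nat) (c 2%nat) (c 3%nat) (c 4%nat) (c 5%nat) (c 6%nat) (c 7%nat).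

Definition ebasis (h : nat) : oct := of_coords (fun k => if Nat.eqb k h then 1 else 0).

Definition oreal (r : R) : oct := mkoct r 0 0 0 0 0 0 0.
Definition oscale (r : R) (x : oct) : oct := of_coords (fun k => r * coord x k).
Definition oone : oct := oreal 1.

Definition oIm (x : oct) : oct := of_coords (fun k => if Nat.eqb k 0 then 0 else coord x k).

Definition onorm2 (x : oct) : R :=
  coord x 0 ^ 2 + coord x 1 ^ 2 + coord x 2 ^ 2 + coord x 3 ^ 2
  + coord x 4 ^ 2 + coord x 5 ^ 2 + coord x 6 ^ 2 + coord x 7 ^ 2.
Definition onorm (x : oct) : R := sqrt (onorm2 x).
Definition oinv (x : oct) : oct := oscale (/ onorm2 x) (oconj x).

Definition sphereS (I : oct) : Prop := omul I I = oopp oone.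

Definition openR2 (D : R -> R -> Prop) : Prop :=
  forall a b, D a b -> exists eps, 0 < eps /\
    forall a' b', Rabs (a' - a) < eps -> Rabs (b' - b) < eps -> D a' b'.
Definition openO (U : oct -> Prop) : Prop :=
  forall x, U x -> exists eps, 0 < eps /\ forall y, onorm (osub y x) < eps -> U y.
Definition connectedO (S : oct -> Prop) : Prop :=
  forall U V : oct -> Prop, openO U -> openO V ->
    (forall x, S x -> U x \/ V x) ->
    (exists x, S x /\ U x) -> (exists x, S x /\ V x) ->
    exists x, S x /\ U x /\ V x.

Definition OmegaD (D : R -> R -> Prop) (x : oct) : Prop :=
  exists a b I, D a b /\ sphereS I /\ x = oadd (oreal a) (oscale b I).

Definition is_real_oct (x : oct) : Prop := exists r, x = oreal r.

Definition stem_of (D : R -> R -> Prop) (f : oct -> oct) (F1 F2 : R -> R -> oct) : Prop :=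
  (forall a b, D a b -> F1 a (- b) = F1 a b) /\
  (forall a b, D a b -> F2 a (- b) = oopp (F2 a b)) /\
  (forall a b I, D a b -> sphereS I ->
     f (oadd (oreal a) (oscale b I)) = oadd (F1 a b) (omul I (F2 a b))).

Definition is_slice (D : R -> R -> Prop) (f : oct -> oct) : Prop :=
  exists F1 F2, stem_of D f F1 F2.

Definition opartial (h : nat) (f : oct -> oct) (x : oct) : oct :=
  of_coords (fun k => Derive (fun t => coord (f (oadd x (oscale t (ebasis h)))) k) 0).

Definition continuous_on_O (S : oct -> Prop) (g : oct -> oct) : Prop :=
  forall x, S x -> forall eps, 0 < eps -> exists delta, 0 < delta /\
    forall y, S y -> onorm (osub y x) < delta -> onorm (osub (g y) (g x)) < eps.

Definition C1_on (S : oct -> Prop) (f : oct -> oct) : Prop :=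
  (forall x, S x -> forall h k, (h < 8)%nat -> (k < 8)%nat ->
      ex_derive (fun t => coord (f (oadd x (oscale t (ebasis h)))) k) 0) /\
  (forall h, (h < 8)%nat -> continuous_on_O S (opartial h f)).

Definition Lop (m n : nat) (f : oct -> oct) (x : oct) : oct :=
  osub (oscale (coord x m) (opartial n f x)) (oscale (coord x n) (opartial m f x)).

Fixpoint osum (n : nat) (g : nat -> oct) : oct :=
  match n with
  | 0%nat => oreal 0
  | S n' => oadd (osum n' g) (g n')
  end.

Definition Gamma (f : oct -> oct) (x : oct) : oct :=
  oopp (osum 8 (fun m => osum 8 (fun n =>
    if (Nat.ltb 0 m && Nat.ltb m n)%bool
    then omul (ebasis m) (omul (ebasis n) (Lop m n f x))
    else oreal 0))).

(* Main.v *)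
Require Import Defs.
From Stdlib Require Import Reals.
From Coquelicot Require Import Coquelicot.
Open Scope R_scope.
From Stdlib Require Import Lra Lia.

Ltac dest8 x := destruct x as [[? ? ? ?] [? ? ? ?]].
Ltac hcases h := destruct h as [|[|[|[|[|[|[|[|h]]]]]]]].

Lemma coord_oadd u v h : coord (oadd u v) h = coord u h + coord v h.
Proof. hcases h; simpl; ring. Qed.
Lemma coord_oscale r u h : coord (oscale r u) h = r * coord u h.
Proof. hcases h; simpl; ring. Qed.
Lemma coord_osub u v h : coord (osub u v) h = coord u h - coord v h.
Proof. hcases h; simpl; ring. Qed.
Lemma coord_of_coords c h : (h < 8)%nat -> coord (of_coords c) h = c h.
Proof. intro H; hcases h; simpl; auto; lia. Qed.
Lemma coord_ebasis j h : (h < 8)%nat -> coord (ebasis j) h = if Nat.eqb h j then 1 else 0.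
Proof. intro H; unfold ebasis; rewrite coord_of_coords; auto. Qed.
Lemma coord_oreal r h : coord (oreal r) h = if Nat.eqb h 0 then r else 0.
Proof. hcases h; simpl; auto. Qed.
Lemma oct_ext u v : (forall h, (h < 8)%nat -> coord u h = coord v h) -> u = v.
Proof.
  intro H. dest8 u. dest8 v.
  pose proof (H 0%nat ltac:(lia)). pose proof (H 1%nat ltac:(lia)).
  pose proof (H 2%nat ltac:(lia)). pose proof (H 3%nat ltac:(lia)).
  pose proof (H 4%nat ltac:(lia)). pose proof (H 5%nat ltac:(lia)).
  pose proof (H 6%nat ltac:(lia)). pose proof (H 7%nat ltac:(lia)).
  simpl in *. subst. reflexivity.
Qed.

Fixpoint rsum (n : nat) (f : nat -> R) : R :=
  match n with 0%nat => 0 | S n' => rsum n' f + f n' end.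

Lemma rsum_le n f g : (forall h, (h < n)%nat -> f h <= g h) -> rsum n f <= rsum n g.
Proof. induction n; intro H; simpl. lra. pose proof (H n ltac:(lia)). pose proof (IHn ltac:(intros; apply H; lia)). lra. Qed.
Lemma rsum_ext n f g : (forall h, (h < n)%nat -> f h = g h) -> rsum n f = rsum n g.
Proof. induction n; intro H; simpl. lra. rewrite (H n ltac:(lia)), IHn by (intros; apply H; lia). lra. Qed.
Lemma rsum_abs n f : Rabs (rsum n f) <= rsum n (fun h => Rabs (f h)).
Proof. induction n; simpl. rewrite Rabs_R0; lra. eapply Rle_trans. apply Rabs_triang. lra. Qed.
Lemma rsum_minus n f g : rsum n (fun h => f h - g h) = rsum n f - rsum n g.
Proof. induction n; simpl. lra. rewrite IHn. lra. Qed.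
Lemma rsum_scal n c f : rsum n (fun h => c * f h) = c * rsum n f.
Proof. induction n; simpl. lra. rewrite IHn. lra. Qed.
Lemma rsum_nonneg n f : (forall h, (h < n)%nat -> 0 <= f h) -> 0 <= rsum n f.
Proof. intro H. replace 0 with (rsum n (fun _ => 0)). apply rsum_le; auto. induction n; simpl; auto. rewrite IHn; intros; try lra. apply H; lia. Qed.
Lemma rsum_term n f j : (forall h, (h < n)%nat -> 0 <= f h) -> (j < n)%nat -> f j <= rsum n f.
Proof.
  induction n; intros H Hj; simpl. lia.
  assert (0 <= rsum n f) by (apply rsum_nonneg; intros; apply H; lia).
  destruct (Nat.eq_dec j n). subst. lra.
  pose proof (IHn ltac:(intros; apply H; lia) ltac:(lia)). pose proof (H n ltac:(lia)). lra.
Qed.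
Lemma rsum_delta m n p : rsum m (fun h => (if Nat.eqb h n then 1 else 0) * p h) = if Nat.ltb n m then p n else 0.
Proof.
  induction m; simpl. destruct n; reflexivity.
  rewrite IHm. destruct (Nat.eqb m n) eqn:E.
  - apply Nat.eqb_eq in E. subst. rewrite (proj2 (Nat.ltb_ge n n)) by lia. rewrite (proj2 (Nat.ltb_lt n (S n))) by lia. ring.
  - apply Nat.eqb_neq in E. destruct (Nat.ltb n m) eqn:E2.
    + apply Nat.ltb_lt in E2. rewrite (proj2 (Nat.ltb_lt n (S m))) by lia. ring.
    + apply Nat.ltb_ge in E2. rewrite (proj2 (Nat.ltb_ge n (S m))) by lia. ring.
Qed.
Lemma rsum_sq_le n f : (forall h, (h < n)%nat -> 0 <= f h) -> rsum n (fun h => f h ^ 2) <= (rsum n f) ^ 2.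
Proof.
  induction n; intro H; cbn [rsum]. lra.
  assert (0 <= rsum n f) by (apply rsum_nonneg; intros; apply H; lia).
  pose proof (H n ltac:(lia)). pose proof (IHn ltac:(intros; apply H; lia)).
  assert (0 <= rsum n f * f n) by (apply Rmult_le_pos; auto). nra.
Qed.

Lemma min_delta n (P : nat -> R -> Prop) :
  (forall h d d', 0 < d' <= d -> P h d -> P h d') ->
  (forall h, (h < n)%nat -> exists d, 0 < d /\ P h d) ->
  exists d, 0 < d /\ forall h, (h < n)%nat -> P h d.
Proof.
  intros Hm. induction n; intro H.
  - exists 1. split. lra. intros; lia.
  - destruct IHn as [d1 [Hd1 H1]]. intros; apply H; lia.
    destruct (H n ltac:(lia)) as [d2 [Hd2 H2]].
    exists (Rmin d1 d2). split. apply Rmin_glb_lt; auto.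
    intros h Hh. destruct (Nat.eq_dec h n).
    + subst. apply Hm with d2; auto. split. apply Rmin_glb_lt; auto. apply Rmin_r.
    + apply Hm with d1. split. apply Rmin_glb_lt; auto. apply Rmin_l. apply H1; lia.
Qed.

Definition l1d (y x : oct) := rsum 8 (fun h => Rabs (coord y h - coord x h)).
Definition dpart (g : oct -> R) (h : nat) (y : oct) :=
  Derive (fun t => g (oadd y (oscale t (ebasis h)))) 0.

Lemma l1d_nonneg y x : 0 <= l1d y x.
Proof. apply rsum_nonneg. intros; apply Rabs_pos. Qed.

Lemma shift_oct z e c s : oadd (oadd z (oscale c e)) (oscale s e) = oadd z (oscale (c + s) e).
Proof. apply oct_ext; intros. rewrite !coord_oadd, !coord_oscale. ring. Qed.
Lemma oadd_scal0 z e : oadd z (oscale 0 e) = z.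
Proof. apply oct_ext; intros. rewrite coord_oadd, coord_oscale. ring. Qed.

Lemma deriv_at (g : oct -> R) z j t :
  ex_derive (fun s => g (oadd (oadd z (oscale t (ebasis j))) (oscale s (ebasis j)))) 0 ->
  is_derive (fun u => g (oadd z (oscale u (ebasis j)))) t (dpart g j (oadd z (oscale t (ebasis j)))).
Proof.
  intro H. apply Derive_correct in H.
  set (F := fun s => g (oadd (oadd z (oscale t (ebasis j))) (oscale s (ebasis j)))) in *.
  assert (H' : is_derive F ((fun u => u - t) t) (Derive F 0)) by (replace (t - t) with 0 by ring; exact H).
  assert (Hg : is_derive (fun u : R => u - t) t 1).
  { replace 1 with (1 - 0) by ring. apply @is_derive_minus. apply @is_derive_id. apply @is_derive_const. }
  pose proof (is_derive_comp F (fun u => u - t) t _ _ H' Hg) as H2.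
  unfold dpart. fold F.
  eapply is_derive_ext; [| replace (Derive F 0) with (scal 1 (Derive F 0)) by (apply @scal_one); exact H2 ].
  intro u. unfold F. simpl. rewrite shift_oct. f_equal. f_equal. f_equal. ring.
Qed.
Definition zpath (y x : oct) (j : nat) := of_coords (fun h => if Nat.ltb h j then coord y h else coord x h).

Lemma zpath0 y x : zpath y x 0 = x.
Proof. apply oct_ext; intros h Hh. unfold zpath. rewrite coord_of_coords by auto. reflexivity. Qed.
Lemma zpath8 y x : zpath y x 8 = y.
Proof. apply oct_ext; intros h Hh. unfold zpath. rewrite coord_of_coords by auto.
  rewrite (proj2 (Nat.ltb_lt h 8)) by auto. reflexivity. Qed.
Lemma zpathS y x j : zpath y x (S j) = oadd (zpath y x j) (oscale (coord y j - coord x j) (ebasis j)).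
Proof. apply oct_ext; intros h Hh. unfold zpath. rewrite coord_oadd, coord_oscale, !coord_of_coords, coord_ebasis by auto.
  destruct (Nat.ltb_spec h (S j)); destruct (Nat.ltb_spec h j); destruct (Nat.eqb_spec h j); try lia; subst; ring. Qed.
Lemma zpath_l1 y x j c : Rabs c <= Rabs (coord y j - coord x j) ->
  l1d (oadd (zpath y x j) (oscale c (ebasis j))) x <= l1d y x.
Proof.
  intro Hc. unfold l1d. apply rsum_le. intros h Hh. unfold zpath.
  rewrite coord_oadd, coord_oscale, coord_of_coords, coord_ebasis by auto.
  destruct (Nat.ltb_spec h j); destruct (Nat.eqb_spec h j); try lia; subst.
  - replace (coord y h + c * 0 - coord x h) with (coord y h - coord x h) by ring. lra.
  - replace (coord x j + c * 1 - coord x j) with c by ring. lra.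
  - replace (coord x h + c * 0 - coord x h) with 0 by ring. rewrite Rabs_R0. apply Rabs_pos.
Qed.
Lemma minmax_abs d c : Rmin 0 d <= c <= Rmax 0 d -> Rabs c <= Rabs d.
Proof. unfold Rmin, Rmax. destruct (Rle_dec 0 d); intros; unfold Rabs; repeat destruct Rcase_abs; lra. Qed.

Lemma diff_est (g : oct -> R) (x : oct) (U : oct -> Prop) (d0 : R) :
  0 < d0 -> (forall y, l1d y x < d0 -> U y) ->
  (forall y h, U y -> (h < 8)%nat -> ex_derive (fun t => g (oadd y (oscale t (ebasis h)))) 0) ->
  (forall h, (h < 8)%nat -> forall eps, 0 < eps -> exists d, 0 < d /\
      forall y, U y -> l1d y x < d -> Rabs (dpart g h y - dpart g h x) < eps) ->
  forall eps, 0 < eps -> exists d, 0 < d /\ forall y, l1d y x < d ->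
    Rabs (g y - g x - rsum 8 (fun h => (coord y h - coord x h) * dpart g h x)) <= eps * l1d y x.
Proof.
  intros Hd0 HU Hex Hc eps Heps.
  destruct (min_delta 8 (fun h d => forall y, U y -> l1d y x < d -> Rabs (dpart g h y - dpart g h x) < eps))
    as [d1 [Hd1 H1]].
  { intros h d d' Hd Hp y Uy Hy. apply Hp; auto. lra. }
  { intros h Hh. apply Hc; auto. }
  exists (Rmin d0 d1). split. apply Rmin_glb_lt; auto.
  intros y Hy. pose proof (Rmin_l d0 d1). pose proof (Rmin_r d0 d1).
  assert (Hj : forall j, (j <= 8)%nat ->
    Rabs (g (zpath y x j) - g x - rsum j (fun h => (coord y h - coord x h) * dpart g h x))
      <= eps * rsum j (fun h => Rabs (coord y h - coord x h))).
  { induction j as [|j IH]; intro Hj.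
    - rewrite zpath0. simpl. replace (g x - g x - 0) with 0 by ring. rewrite Rabs_R0. lra.
    - specialize (IH ltac:(lia)). cbn [rsum].
      set (dj := coord y j - coord x j) in *.
      set (phi := fun u => g (oadd (zpath y x j) (oscale u (ebasis j)))).
      assert (Hin : forall c, Rmin 0 dj <= c <= Rmax 0 dj -> U (oadd (zpath y x j) (oscale c (ebasis j)))
          /\ l1d (oadd (zpath y x j) (oscale c (ebasis j))) x < d1).
      { intros c Hcc. pose proof (zpath_l1 y x j c (minmax_abs _ _ Hcc)). split. apply HU. lra. lra. }
      assert (Hder : forall c, Rmin 0 dj <= c <= Rmax 0 dj ->
          is_derive phi c (dpart g j (oadd (zpath y x j) (oscale c (ebasis j))))).
      { intros c Hcc. apply deriv_at. destruct (Hin c Hcc) as [Uc _].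
        apply Hex; auto; lia. }
      destruct (MVT_gen phi 0 dj (fun c => dpart g j (oadd (zpath y x j) (oscale c (ebasis j))))) as [c [Hcc Hmvt]].
      { intros u Hu. apply Hder. lra. }
      { intros u Hu. apply (proj2 (continuity_pt_filterlim _ _)). apply @ex_derive_continuous.
        eexists. apply Hder. exact Hu. }
      unfold phi in Hmvt. cbv beta in Hmvt. rewrite oadd_scal0 in Hmvt.
      assert (Hz : oadd (zpath y x j) (oscale dj (ebasis j)) = zpath y x (S j)) by (unfold dj; symmetry; apply zpathS).
      rewrite Hz in Hmvt.
      destruct (Hin c Hcc) as [Uc Lc].
      pose proof (H1 j ltac:(lia) _ Uc Lc) as Hcl.
      replace (g (zpath y x (S j)) - g x - (rsum j (fun h => (coord y h - coord x h) * dpart g h x) + dj * dpart g j x))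
        with ((g (zpath y x j) - g x - rsum j (fun h => (coord y h - coord x h) * dpart g h x))
              + dj * (dpart g j (oadd (zpath y x j) (oscale c (ebasis j))) - dpart g j x)) by (assert (Heq : g (zpath y x (S j)) = g (zpath y x j) + dpart g j (oadd (zpath y x j) (oscale c (ebasis j))) * (dj - 0)) by lra; rewrite Heq; ring).
      eapply Rle_trans. apply Rabs_triang. rewrite Rabs_mult.
      assert (Rabs dj * Rabs (dpart g j (oadd (zpath y x j) (oscale c (ebasis j))) - dpart g j x) <= Rabs dj * eps).
      { apply Rmult_le_compat_l. apply Rabs_pos. lra. }
      lra. }
  specialize (Hj 8%nat ltac:(lia)). rewrite zpath8 in Hj. exact Hj.
Qed.

Lemma chain (g : oct -> R) (x : oct) (gam : R -> oct) (dga dg : nat -> R) :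
  gam 0 = x ->
  (forall h, (h < 8)%nat -> is_derive (fun t => coord (gam t) h) 0 (dga h)) ->
  (forall eps, 0 < eps -> exists d, 0 < d /\ forall y, l1d y x < d ->
    Rabs (g y - g x - rsum 8 (fun h => (coord y h - coord x h) * dg h)) <= eps * l1d y x) ->
  is_derive (fun t => g (gam t)) 0 (rsum 8 (fun h => dga h * dg h)).
Proof.
  intros H0 Hd Hdiff. apply is_derive_Reals. intros eps Heps.
  set (K := rsum 8 (fun h => Rabs (dga h) + 1)).
  assert (HK : 1 <= K).
  { unfold K. eapply Rle_trans; [| apply (rsum_term _ _ 0%nat)]. pose proof (Rabs_pos (dga 0%nat)). lra.
    intros. pose proof (Rabs_pos (dga h)). lra. lia. }
  set (M := rsum 8 (fun h => Rabs (dg h))).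
  assert (HM : 0 <= M) by (apply rsum_nonneg; intros; apply Rabs_pos).
  set (eta := Rmin 1 (eps / (2 * (M + 1)))).
  assert (Heta : 0 < eta) by (apply Rmin_glb_lt; [lra | apply Rdiv_lt_0_compat; lra]).
  assert (Heta1 : eta <= 1) by apply Rmin_l.
  assert (Heta2 : eta <= eps / (2 * (M + 1))) by apply Rmin_r.
  destruct (Hdiff (eps / (2 * K)) ltac:(apply Rdiv_lt_0_compat; lra)) as [d1 [Hd1 H1]].
  destruct (min_delta 8 (fun h d => forall t, t <> 0 -> Rabs t < d ->
      Rabs ((coord (gam (0 + t)) h - coord (gam 0) h) / t - dga h) < eta)) as [d2 [Hd2 H2]].
  { intros h d d' Hdd Hp t Ht Ht'. apply Hp; auto. lra. }
  { intros h Hh. destruct (proj1 (is_derive_Reals _ _ _) (Hd h Hh) eta Heta) as [dl Hdl].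
    exists dl. split. apply cond_pos. intros t Ht Ht'. apply Hdl; auto. }
  assert (Hpos : 0 < Rmin d2 (d1 / K)) by (apply Rmin_glb_lt; [lra | apply Rdiv_lt_0_compat; lra]).
  exists (mkposreal _ Hpos). intros t Ht0 Ht. simpl in Ht.
  pose proof (Rmin_l d2 (d1 / K)). pose proof (Rmin_r d2 (d1 / K)).
  assert (Hr : forall h, (h < 8)%nat -> Rabs ((coord (gam t) h - coord x h) / t - dga h) < eta).
  { intros h Hh. rewrite <- H0. replace t with (0 + t) at 1 by ring. apply H2; auto. lra. }
  assert (Hat : 0 < Rabs t) by (apply Rabs_pos_lt; auto).
  assert (HD : forall h, (h < 8)%nat -> Rabs (coord (gam t) h - coord x h) <= Rabs t * (Rabs (dga h) + 1)).
  { intros h Hh. specialize (Hr h Hh).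
    replace (coord (gam t) h - coord x h) with (t * (((coord (gam t) h - coord x h) / t - dga h) + dga h)) by (field; auto).
    rewrite Rabs_mult. apply Rmult_le_compat_l. apply Rabs_pos.
    eapply Rle_trans. apply Rabs_triang. lra. }
  assert (HL : l1d (gam t) x <= Rabs t * K).
  { unfold l1d, K. rewrite <- rsum_scal. apply rsum_le. exact HD. }
  assert (HL2 : l1d (gam t) x < d1).
  { eapply Rle_lt_trans. exact HL. apply Rmult_lt_reg_r with (/ K). apply Rinv_0_lt_compat; lra.
    rewrite Rmult_assoc, Rinv_r by lra. rewrite Rmult_1_r. unfold Rdiv in *. lra. }
  specialize (H1 _ HL2).
  set (E := g (gam t) - g x - rsum 8 (fun h => (coord (gam t) h - coord x h) * dg h)) in *.
  assert (HE : Rabs E <= eps / 2 * Rabs t).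
  { eapply Rle_trans. exact H1. apply Rle_trans with (eps / (2 * K) * (Rabs t * K)).
    apply Rmult_le_compat_l. apply Rlt_le, Rdiv_lt_0_compat; lra. exact HL.
    right. field. lra. }
  set (rr := fun h => (coord (gam t) h - coord x h) / t - dga h).
  assert (Hsplit : (g (gam (0 + t)) - g (gam 0)) / t - rsum 8 (fun h => dga h * dg h)
                   = E / t + rsum 8 (fun h => rr h * dg h)).
  { rewrite Rplus_0_l, H0.
    rewrite (rsum_ext 8 (fun h => rr h * dg h) (fun h => / t * ((coord (gam t) h - coord x h) * dg h) - dga h * dg h))
      by (intros; unfold rr; field; auto).
    rewrite rsum_minus, rsum_scal. unfold E. field. auto. }
  cbv beta. rewrite Hsplit.
  assert (Hs : Rabs (rsum 8 (fun h => rr h * dg h)) <= eta * M).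
  { eapply Rle_trans. apply rsum_abs. unfold M. rewrite <- rsum_scal. apply rsum_le.
    intros h Hh. rewrite Rabs_mult. apply Rmult_le_compat_r. apply Rabs_pos. apply Rlt_le, Hr; auto. }
  assert (HEt : Rabs (E / t) <= eps / 2).
  { unfold Rdiv. rewrite Rabs_mult, Rabs_inv. apply Rmult_le_reg_r with (Rabs t); auto.
    rewrite Rmult_assoc, Rinv_l by lra. lra. }
  assert (HetaM : eta * M < eps / 2).
  { apply Rle_lt_trans with (eps / (2 * (M + 1)) * M). apply Rmult_le_compat_r; auto.
    apply Rmult_lt_reg_r with (2 * (M + 1)). lra.
    replace (eps / (2 * (M + 1)) * M * (2 * (M + 1))) with (eps * M) by (field; lra). nra. }
  eapply Rle_lt_trans. apply Rabs_triang. lra.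
Qed.

Definition Nexp (I : oct) := coord I 1 ^2 + coord I 2 ^2 + coord I 3 ^2 + coord I 4 ^2 + coord I 5 ^2 + coord I 6 ^2 + coord I 7 ^2.

Lemma sphere_inv I : sphereS I -> coord I 0 = 0 /\ Nexp I = 1.
Proof.
  unfold sphereS, Nexp. intro H. destruct I as [[r r0 r1 r2] [r3 r4 r5 r6]]. unfold omul, oopp, oone, oreal, mkoct, qmul, qadd, qopp, qconj in H. simpl in H.
  injection H. intros E7 E6 E5 E4 E3 E2 E1 E0. simpl. clear H.
  assert (r = 0).
  { destruct (Req_dec r 0); auto. exfalso.
    assert (r0 = 0) by nra. assert (r1 = 0) by nra. assert (r2 = 0) by nra.
    assert (r3 = 0) by nra. assert (r4 = 0) by nra. assert (r5 = 0) by nra. assert (r6 = 0) by nra. subst. nra. }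
  subst. split; auto. nra.
Qed.

Lemma sphere_of J : coord J 0 = 0 -> Nexp J = 1 -> sphereS J.
Proof.
  unfold sphereS, Nexp. intros H0 H. destruct J as [[r r0 r1 r2] [r3 r4 r5 r6]]. simpl in H0, H. subst.
  unfold omul, oopp, oone, oreal, mkoct, qmul, qadd, qopp, qconj. simpl.
  f_equal; f_equal; nra.
Qed.

Lemma Ih_le I h : (1 <= h <= 7)%nat -> coord I h ^ 2 <= Nexp I.
Proof.
  intro H. unfold Nexp.
  pose proof (pow2_ge_0 (coord I 1)). pose proof (pow2_ge_0 (coord I 2)). pose proof (pow2_ge_0 (coord I 3)).
  pose proof (pow2_ge_0 (coord I 4)). pose proof (pow2_ge_0 (coord I 5)). pose proof (pow2_ge_0 (coord I 6)).
  pose proof (pow2_ge_0 (coord I 7)).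
  hcases h; try lia; lra.
Qed.

Lemma sq_diff_le u v d B : Rabs (u - v) <= d -> Rabs v <= B -> Rabs (u ^ 2 - v ^ 2) <= Rabs (u - v) * (d + 2 * B).
Proof.
  intros H1 H2. replace (u ^ 2 - v ^ 2) with ((u - v) * ((u - v) + 2 * v)) by ring.
  rewrite Rabs_mult. apply Rmult_le_compat_l. apply Rabs_pos.
  eapply Rle_trans. apply Rabs_triang. rewrite Rabs_mult. rewrite (Rabs_right 2) by lra. lra.
Qed.

Lemma ball_lemma (D : R -> R -> Prop) (a b : R) (I : oct) :
  openR2 D -> (forall a b, D a b -> D a (- b)) -> D a b -> coord I 0 = 0 -> Nexp I = 1 -> b <> 0 ->
  exists d0, 0 < d0 /\ forall y, l1d y (oadd (oreal a) (oscale b I)) < d0 -> OmegaD D y.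
Proof.
  intros Hop Hsym HD HI0 HN Hb.
  set (x := oadd (oreal a) (oscale b I)).
  set (B := Rabs b).
  assert (HB : 0 < B) by (apply Rabs_pos_lt; auto).
  assert (HDB : D a B).
  { unfold B, Rabs. destruct (Rcase_abs b); auto. }
  destruct (Hop a B HDB) as [eps [Heps Hop2]].
  exists (Rmin (eps / 3) (B / 3)). split. apply Rmin_glb_lt; lra.
  intros y Hy. pose proof (Rmin_l (eps / 3) (B / 3)). pose proof (Rmin_r (eps / 3) (B / 3)).
  set (d := l1d y x) in *.
  assert (Hd0 : 0 <= d) by apply l1d_nonneg.
  assert (Hcx : forall h, (h < 8)%nat -> coord x h = (if Nat.eqb h 0 then a else 0) + b * coord I h).
  { intros. unfold x. rewrite coord_oadd, coord_oreal, coord_oscale. reflexivity. }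
  assert (Hterm : forall h, (h < 8)%nat -> Rabs (coord y h - coord x h) <= d).
  { intros h Hh. unfold d, l1d. apply (rsum_term 8 (fun h => Rabs (coord y h - coord x h))). intros; apply Rabs_pos. auto. }
  assert (Hxb : forall h, (1 <= h <= 7)%nat -> Rabs (coord x h) <= B).
  { intros h Hh. rewrite Hcx by lia. destruct (Nat.eqb_spec h 0); try lia.
    rewrite Rplus_0_l, Rabs_mult. unfold B. rewrite <- (Rmult_1_r (Rabs b)) at 2.
    apply Rmult_le_compat_l. apply Rabs_pos. pose proof (Ih_le I h Hh). rewrite HN in H1.
    apply Rabs_le. split; nra. }
  set (r2 := rsum 8 (fun h => if Nat.eqb h 0 then 0 else coord y h ^ 2)).
  assert (Hx2 : rsum 8 (fun h => if Nat.eqb h 0 then 0 else coord x h ^ 2) = b ^ 2).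
  { rewrite <- (Rmult_1_r (b ^ 2)). rewrite <- HN. unfold x, Nexp. simpl. ring. }
  assert (Hr2 : Rabs (r2 - b ^ 2) <= d * (d + 2 * B)).
  { rewrite <- Hx2. unfold r2. rewrite <- rsum_minus. eapply Rle_trans. apply rsum_abs.
    apply Rle_trans with (rsum 8 (fun h => Rabs (coord y h - coord x h) * (d + 2 * B))).
    - apply rsum_le. intros h Hh. destruct (Nat.eqb_spec h 0).
      + replace (0 - 0) with 0 by ring. rewrite Rabs_R0. apply Rmult_le_pos. apply Rabs_pos. lra.
      + apply sq_diff_le. apply Hterm; auto. apply Hxb. lia.
    - right. rewrite (rsum_ext 8 _ (fun h => (d + 2 * B) * Rabs (coord y h - coord x h))) by (intros; ring).
      rewrite rsum_scal. fold (l1d y x). fold d. ring. }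
  assert (Hr2pos : 0 <= r2).
  { unfold r2. apply rsum_nonneg. intros h _. destruct (Nat.eqb h 0). lra. apply pow2_ge_0. }
  set (rho := sqrt r2).
  assert (Hrho : 0 <= rho) by apply sqrt_pos.
  assert (Hrr : rho * rho = r2) by (apply sqrt_sqrt; auto).
  assert (HB2 : B * B = b ^ 2) by (unfold B; rewrite <- Rabs_mult, Rabs_right; [ring | nra]).
  assert (Hdiff : Rabs (rho - B) * B <= d * (d + 2 * B)).
  { eapply Rle_trans; [| exact Hr2]. replace (r2 - b ^ 2) with ((rho - B) * (rho + B)) by (rewrite <- Hrr, <- HB2; ring).
    rewrite Rabs_mult. apply Rmult_le_compat_l. apply Rabs_pos. rewrite Rabs_right; lra. }
  assert (HX : Rabs (rho - B) < eps /\ Rabs (rho - B) < B).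
  { pose proof (Rabs_pos (rho - B)). split; nra. }
  destruct HX as [HX1 HX2].
  assert (Hrho_pos : 0 < rho).
  { destruct (Rle_dec rho B). rewrite Rabs_left1 in HX2; lra. lra. }
  assert (HDy : D (coord y 0) rho).
  { apply Hop2; auto. pose proof (Hterm 0%nat ltac:(lia)). rewrite Hcx in H1 by lia. cbn [Nat.eqb] in H1.
    rewrite HI0 in H1. replace (a + b * 0) with a in H1 by ring. lra. }
  exists (coord y 0), rho, (of_coords (fun h => if Nat.eqb h 0 then 0 else coord y h / rho)).
  split; [exact HDy | split].
  - apply sphere_of. rewrite coord_of_coords by lia. reflexivity.
    unfold Nexp. rewrite !coord_of_coords by lia. simpl.
    transitivity (r2 / (rho * rho)). unfold r2. simpl. field. lra.
    rewrite Hrr. field. rewrite <- Hrr. nra.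
  - apply oct_ext. intros h Hh. rewrite coord_oadd, coord_oreal, coord_oscale, coord_of_coords by auto.
    destruct (Nat.eqb_spec h 0). subst. ring. field. lra.
Qed.

Lemma omul_lin r t I w F : omul (oscale r (oadd I (oscale t w))) F = oscale r (oadd (omul I F) (oscale t (omul w F))).
Proof.
  destruct I as [[i0 i1 i2 i3] [i4 i5 i6 i7]]. destruct w as [[w0 w1 w2 w3] [w4 w5 w6 w7]].
  destruct F as [[f0 f1 f2 f3] [f4 f5 f6 f7]].
  cbv beta iota zeta delta [Defs.q0 Defs.q1 Defs.q2 Defs.q3 Defs.oa Defs.ob omul oadd oscale of_coords mkoct qmul qadd qopp qconj coord].
  f_equal; f_equal; ring.
Qed.

Lemma curve_deriv c0 c1 c2 M : 0 <= M ->
  is_derive (fun t => c0 + / sqrt (1 + t ^ 2 * M) * (c1 + t * c2)) 0 c2.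
Proof.
  intro HM. auto_derive; replace (1 + 0 * (0 * 1) * M) with 1 by ring; rewrite sqrt_1.
  - split; [lra | split; [lra | auto]].
  - field.
Qed.
Lemma curve_deriv2 c0 b c1 c2 M : 0 <= M ->
  is_derive (fun t => c0 + b * (/ sqrt (1 + t ^ 2 * M) * (c1 + t * c2))) 0 (b * c2).
Proof.
  intro HM. auto_derive; replace (1 + 0 * (0 * 1) * M) with 1 by ring; rewrite sqrt_1.
  - split; [lra | split; [lra | auto]].
  - field.
Qed.

Lemma key (D : R -> R -> Prop) (f : oct -> oct) (F1 F2 : R -> R -> oct) (a b : R) (I w : oct) (k : nat) :
  stem_of D f F1 F2 -> D a b -> coord I 0 = 0 -> Nexp I = 1 -> coord w 0 = 0 ->
  rsum 8 (fun h => coord w h * coord I h) = 0 -> (k < 8)%nat ->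
  (forall eps, 0 < eps -> exists d, 0 < d /\ forall y, l1d y (oadd (oreal a) (oscale b I)) < d ->
    Rabs (coord (f y) k - coord (f (oadd (oreal a) (oscale b I))) k
       - rsum 8 (fun h => (coord y h - coord (oadd (oreal a) (oscale b I)) h)
            * dpart (fun y => coord (f y) k) h (oadd (oreal a) (oscale b I))))
      <= eps * l1d y (oadd (oreal a) (oscale b I))) ->
  b * rsum 8 (fun h => coord w h * dpart (fun y => coord (f y) k) h (oadd (oreal a) (oscale b I)))
    = coord (omul w (F2 a b)) k.
Proof.
  intros Hstem HD HI0 HN Hw0 Horth Hk Hdiff.
  set (x := oadd (oreal a) (oscale b I)) in *.
  set (M := rsum 8 (fun h => coord w h ^ 2)).
  assert (HM : 0 <= M) by (apply rsum_nonneg; intros; apply pow2_ge_0).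
  assert (Hpos : forall t, 0 < 1 + t ^ 2 * M) by (intro t; pose proof (pow2_ge_0 t); nra).
  set (J := fun t => oscale (/ sqrt (1 + t ^ 2 * M)) (oadd I (oscale t w))).
  assert (HJ : forall t, sphereS (J t)).
  { intro t. apply sphere_of.
    - unfold J. rewrite coord_oscale, coord_oadd, coord_oscale, HI0, Hw0. ring.
    - assert (Hs : sqrt (1 + t ^ 2 * M) * sqrt (1 + t ^ 2 * M) = 1 + t ^ 2 * M) by (apply sqrt_sqrt; specialize (Hpos t); lra).
      assert (Hs0 : sqrt (1 + t ^ 2 * M) <> 0) by (apply Rgt_not_eq, sqrt_lt_R0, Hpos).
      transitivity (/ (sqrt (1 + t ^ 2 * M) * sqrt (1 + t ^ 2 * M)) * (Nexp I + 2 * t * rsum 8 (fun h => coord w h * coord I h) + t ^ 2 * M)).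
      + unfold Nexp, J, M. rewrite !coord_oscale, !coord_oadd, !coord_oscale. cbn [rsum]. rewrite HI0, Hw0. field.
        unfold M in Hs0; cbn [rsum] in Hs0; rewrite Hw0 in Hs0; exact Hs0.
      + rewrite Hs, HN, Horth. field. specialize (Hpos t). lra. }
  assert (HJ0 : J 0 = I).
  { apply oct_ext. intros h Hh. unfold J. rewrite coord_oscale, coord_oadd, coord_oscale.
    replace (1 + 0 ^ 2 * M) with 1 by ring. rewrite sqrt_1. field. }
  set (gam := fun t => oadd (oreal a) (oscale b (J t))).
  assert (Hg0 : gam 0 = x) by (unfold gam; rewrite HJ0; reflexivity).
  assert (Hdg : forall h, (h < 8)%nat -> is_derive (fun t => coord (gam t) h) 0 (b * coord w h)).
  { intros h Hh. eapply is_derive_ext; [| apply (curve_deriv2 (coord (oreal a) h) b (coord I h) (coord w h) M HM)].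
    intro t. unfold gam, J. rewrite coord_oadd, coord_oscale, coord_oscale, coord_oadd, coord_oscale. reflexivity. }
  assert (H1 : is_derive (fun t => coord (f (gam t)) k) 0 (coord (omul w (F2 a b)) k)).
  { eapply is_derive_ext; [| apply (curve_deriv (coord (F1 a b) k) (coord (omul I (F2 a b)) k) (coord (omul w (F2 a b)) k) M HM)].
    intro t. destruct Hstem as [_ [_ Hst]]. unfold gam. rewrite (Hst a b (J t) HD (HJ t)).
    unfold J. rewrite omul_lin, coord_oadd, coord_oscale, coord_oadd, coord_oscale. reflexivity. }
  assert (H2 : is_derive (fun t => coord (f (gam t)) k) 0
                 (rsum 8 (fun h => (b * coord w h) * dpart (fun y => coord (f y) k) h x))).
  { apply (chain (fun y => coord (f y) k) x gam). exact Hg0. exact Hdg. exact Hdiff. }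
  apply is_derive_unique in H1. apply is_derive_unique in H2. rewrite H1 in H2.
  rewrite H2, <- rsum_scal. apply rsum_ext. intros; ring.
Qed.

Lemma onorm2_rsum z : onorm2 z = rsum 8 (fun h => coord z h ^ 2).
Proof. unfold onorm2. cbn [rsum]. ring. Qed.
Lemma coord_le_onorm z k : (k < 8)%nat -> Rabs (coord z k) <= onorm z.
Proof.
  intro Hk. unfold onorm. rewrite <- (sqrt_pow2 (Rabs (coord z k))) by apply Rabs_pos.
  apply sqrt_le_1_alt. rewrite pow2_abs, onorm2_rsum.
  apply (rsum_term 8 (fun h => coord z h ^ 2)); auto. intros; apply pow2_ge_0.
Qed.
Lemma onorm_l1 y x : onorm (osub y x) <= l1d y x.
Proof.
  unfold onorm. rewrite <- (sqrt_pow2 (l1d y x)) by apply l1d_nonneg. apply sqrt_le_1_alt.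
  rewrite onorm2_rsum. unfold l1d.
  eapply Rle_trans; [| apply rsum_sq_le; intros; apply Rabs_pos].
  right. apply rsum_ext. intros h Hh. rewrite coord_osub, pow2_abs. reflexivity.
Qed.
Lemma l1d_self x : l1d x x = 0.
Proof. unfold l1d. cbn [rsum]. rewrite !Rminus_diag, Rabs_R0. ring. Qed.

Lemma dpart_opartial f h k y : (k < 8)%nat -> dpart (fun y => coord (f y) k) h y = coord (opartial h f y) k.
Proof. intro Hk. unfold opartial, dpart. rewrite coord_of_coords by auto. reflexivity. Qed.

Lemma omul_scal_r w r F : omul w (oscale r F) = oscale r (omul w F).
Proof.
  destruct w as [[w0 w1 w2 w3] [w4 w5 w6 w7]]. destruct F as [[f0 f1 f2 f3] [f4 f5 f6 f7]].
  cbv beta iota zeta delta [Defs.q0 Defs.q1 Defs.q2 Defs.q3 Defs.oa Defs.ob omul oadd oscale of_coords mkoct qmul qadd qopp qconj coord].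
  f_equal; f_equal; ring.
Qed.
Lemma omul_scal_l w r F : omul (oscale r w) F = oscale r (omul w F).
Proof.
  destruct w as [[w0 w1 w2 w3] [w4 w5 w6 w7]]. destruct F as [[f0 f1 f2 f3] [f4 f5 f6 f7]].
  cbv beta iota zeta delta [Defs.q0 Defs.q1 Defs.q2 Defs.q3 Defs.oa Defs.ob omul oadd oscale of_coords mkoct qmul qadd qopp qconj coord].
  f_equal; f_equal; ring.
Qed.
Lemma omul_alt I F : coord I 0 = 0 -> omul I (omul I F) = oscale (- Nexp I) F.
Proof.
  intro H0. destruct I as [[w0 w1 w2 w3] [w4 w5 w6 w7]]. simpl in H0. subst w0.
  destruct F as [[f0 f1 f2 f3] [f4 f5 f6 f7]]. unfold Nexp.
  cbv beta iota zeta delta [Defs.q0 Defs.q1 Defs.q2 Defs.q3 Defs.oa Defs.ob omul oadd oscale of_coords mkoct qmul qadd qopp qconj coord].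
  f_equal; f_equal; ring.
Qed.
Lemma oscale_oscale r s F : oscale r (oscale s F) = oscale (r * s) F.
Proof. apply oct_ext; intros. rewrite !coord_oscale. ring. Qed.
Lemma oIm_x a b I : coord I 0 = 0 -> oIm (oadd (oreal a) (oscale b I)) = oscale b I.
Proof.
  intro H0. apply oct_ext; intros h Hh. unfold oIm. rewrite coord_of_coords by auto.
  rewrite coord_oadd, coord_oreal, !coord_oscale. destruct (Nat.eqb_spec h 0). subst; rewrite H0; ring. ring.
Qed.
Lemma oinv_bI b I : coord I 0 = 0 -> Nexp I = 1 -> b <> 0 -> oinv (oscale b I) = oscale (- / b) I.
Proof.
  intros H0 HN Hb. unfold oinv.
  assert (E : onorm2 (oscale b I) = b ^ 2).
  { rewrite onorm2_rsum. cbn [rsum]. rewrite !coord_oscale, H0. unfold Nexp in HN.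
    rewrite <- (Rmult_1_r (b ^ 2)), <- HN. ring. }
  rewrite E. apply oct_ext; intros h Hh. rewrite !coord_oscale.
  destruct I as [[w0 w1 w2 w3] [w4 w5 w6 w7]]. simpl in H0. subst w0.
  hcases h; try lia; simpl; field; auto.
Qed.

Lemma final_step a b I F : coord I 0 = 0 -> Nexp I = 1 -> b <> 0 ->
  oscale (/ b) F = oscale (/ 6) (omul (oinv (oIm (oadd (oreal a) (oscale b I))))
                     (oscale (6 * b * Nexp I) (omul I (oscale (/ b) F)))).
Proof.
  intros H0 HN Hb. rewrite oIm_x, oinv_bI by auto.
  rewrite omul_scal_l, !omul_scal_r, omul_alt, HN by auto.
  rewrite !oscale_oscale. f_equal. field. auto.
Qed.
Lemma emul1 (y : oct) : omul (ebasis 1) y = mkoct (- coord y 1) (coord y 0) (- coord y 3) (coord y 2) (coord y 5) (- coord y 4) (coord y 7) (- coord y 6).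
Proof. destruct y as [[? ? ? ?] [? ? ? ?]]; unfold omul, ebasis, of_coords, mkoct, qmul, qadd, qopp, qconj, coord; simpl; f_equal; f_equal; ring. Qed.
Lemma emul2 (y : oct) : omul (ebasis 2) y = mkoct (- coord y 2) (coord y 3) (coord y 0) (- coord y 1) (coord y 6) (- coord y 7) (- coord y 4) (coord y 5).
Proof. destruct y as [[? ? ? ?] [? ? ? ?]]; unfold omul, ebasis, of_coords, mkoct, qmul, qadd, qopp, qconj, coord; simpl; f_equal; f_equal; ring. Qed.
Lemma emul3 (y : oct) : omul (ebasis 3) y = mkoct (- coord y 3) (- coord y 2) (coord y 1) (coord y 0) (coord y 7) (coord y 6) (- coord y 5) (- coord y 4).
Proof. destruct y as [[? ? ? ?] [? ? ? ?]]; unfold omul, ebasis, of_coords, mkoct, qmul, qadd, qopp, qconj, coord; simpl; f_equal; f_equal; ring. Qed.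
Lemma emul4 (y : oct) : omul (ebasis 4) y = mkoct (- coord y 4) (- coord y 5) (- coord y 6) (- coord y 7) (coord y 0) (coord y 1) (coord y 2) (coord y 3).
Proof. destruct y as [[? ? ? ?] [? ? ? ?]]; unfold omul, ebasis, of_coords, mkoct, qmul, qadd, qopp, qconj, coord; simpl; f_equal; f_equal; ring. Qed.
Lemma emul5 (y : oct) : omul (ebasis 5) y = mkoct (- coord y 5) (coord y 4) (coord y 7) (- coord y 6) (- coord y 1) (coord y 0) (coord y 3) (- coord y 2).
Proof. destruct y as [[? ? ? ?] [? ? ? ?]]; unfold omul, ebasis, of_coords, mkoct, qmul, qadd, qopp, qconj, coord; simpl; f_equal; f_equal; ring. Qed.
Lemma emul6 (y : oct) : omul (ebasis 6) y = mkoct (- coord y 6) (- coord y 7) (coord y 4) (coord y 5) (- coord y 2) (- coord y 3) (coord y 0) (coord y 1).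
Proof. destruct y as [[? ? ? ?] [? ? ? ?]]; unfold omul, ebasis, of_coords, mkoct, qmul, qadd, qopp, qconj, coord; simpl; f_equal; f_equal; ring. Qed.
Lemma emul7 (y : oct) : omul (ebasis 7) y = mkoct (- coord y 7) (coord y 6) (- coord y 5) (coord y 4) (- coord y 3) (coord y 2) (- coord y 1) (coord y 0).
Proof. destruct y as [[? ? ? ?] [? ? ? ?]]; unfold omul, ebasis, of_coords, mkoct, qmul, qadd, qopp, qconj, coord; simpl; f_equal; f_equal; ring. Qed.
Definition emulS (n : nat) (y : oct) : oct :=
  match n with
  | 1%nat => mkoct (- coord y 1) (coord y 0) (- coord y 3) (coord y 2) (coord y 5) (- coord y 4) (coord y 7) (- coord y 6)
  | 2%nat => mkoct (- coord y 2) (coord y 3) (coord y 0) (- coord y 1) (coord y 6) (- coord y 7) (- coord y 4) (coord y 5)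
  | 3%nat => mkoct (- coord y 3) (- coord y 2) (coord y 1) (coord y 0) (coord y 7) (coord y 6) (- coord y 5) (- coord y 4)
  | 4%nat => mkoct (- coord y 4) (- coord y 5) (- coord y 6) (- coord y 7) (coord y 0) (coord y 1) (coord y 2) (coord y 3)
  | 5%nat => mkoct (- coord y 5) (coord y 4) (coord y 7) (- coord y 6) (- coord y 1) (coord y 0) (coord y 3) (- coord y 2)
  | 6%nat => mkoct (- coord y 6) (- coord y 7) (coord y 4) (coord y 5) (- coord y 2) (- coord y 3) (coord y 0) (coord y 1)
  | _ => mkoct (- coord y 7) (coord y 6) (- coord y 5) (coord y 4) (- coord y 3) (coord y 2) (- coord y 1) (coord y 0)
  end.
Lemma emulS_ok n y : (1 <= n <= 7)%nat -> omul (ebasis n) y = emulS n y.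
Proof.
  intro H. destruct n as [|[|[|[|[|[|[|[|n]]]]]]]]; try lia.
  all: simpl; auto using emul1, emul2, emul3, emul4, emul5, emul6, emul7.
Qed.
Lemma osum_ext n g g' : (forall i, (i < n)%nat -> g i = g' i) -> osum n g = osum n g'.
Proof.
  induction n; intro H; simpl; auto. rewrite IHn by (intros; apply H; lia). rewrite H by lia. reflexivity.
Qed.
Definition GammaP (P : nat -> oct) (x : oct) : oct :=
  oopp (osum 8 (fun m => osum 8 (fun n =>
    if (Nat.ltb 0 m && Nat.ltb m n)%bool
    then omul (ebasis m) (omul (ebasis n)
       (osub (oscale (coord x m) (P n)) (oscale (coord x n) (P m))))
    else oreal 0))).
Definition GammaE (P : nat -> oct) (x : oct) : oct :=
  oopp (osum 8 (fun m => osum 8 (fun n =>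
    if (Nat.ltb 0 m && Nat.ltb m n)%bool
    then emulS m (emulS n
       (osub (oscale (coord x m) (P n)) (oscale (coord x n) (P m))))
    else oreal 0))).
Lemma GammaPE P x : GammaP P x = GammaE P x.
Proof.
  unfold GammaP, GammaE. f_equal. apply osum_ext; intros m Hm. apply osum_ext; intros n Hn.
  destruct (Nat.ltb 0 m) eqn:E1; destruct (Nat.ltb m n) eqn:E2; simpl; auto.
  apply Nat.ltb_lt in E1. apply Nat.ltb_lt in E2.
  rewrite (emulS_ok n) by lia. rewrite (emulS_ok m) by lia. reflexivity.
Qed.
Definition SE (P : nat -> oct) := osum 8 (fun n => if Nat.eqb n 0 then oreal 0 else omul (ebasis n) (P n)).
Definition SEE (P : nat -> oct) := osum 8 (fun n => if Nat.eqb n 0 then oreal 0 else emulS n (P n)).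
Lemma SE_E P : SE P = SEE P.
Proof.
  unfold SE, SEE. apply osum_ext; intros n Hn. destruct (Nat.eqb n 0) eqn:E; auto.
  apply Nat.eqb_neq in E. apply emulS_ok. lia.
Qed.
Definition SX (P : nat -> oct) x := osum 8 (fun n => if Nat.eqb n 0 then oreal 0 else oscale (coord x n) (P n)).
Definition P7 (p1 p2 p3 p4 p5 p6 p7 : oct) (n : nat) : oct :=
  match n with 1 => p1 | 2 => p2 | 3 => p3 | 4 => p4 | 5 => p5 | 6 => p6 | _ => p7 end.
Lemma stage1 (p1 p2 p3 p4 p5 p6 p7 x : oct) :
  let P := P7 p1 p2 p3 p4 p5 p6 p7 in
  GammaE P x = oopp (oadd (omul (oIm x) (SEE P)) (SX P x)).
Proof.
  intro P. unfold GammaE, SEE, SX, P.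
  destruct x as [[? ? ? ?] [? ? ? ?]].
  destruct p1 as [[? ? ? ?] [? ? ? ?]]. destruct p2 as [[? ? ? ?] [? ? ? ?]].
  destruct p3 as [[? ? ? ?] [? ? ? ?]]. destruct p4 as [[? ? ? ?] [? ? ? ?]].
  destruct p5 as [[? ? ? ?] [? ? ? ?]]. destruct p6 as [[? ? ? ?] [? ? ? ?]].
  destruct p7 as [[? ? ? ?] [? ? ? ?]].
  Time cbv beta iota zeta delta [Defs.q0 Defs.q1 Defs.q2 Defs.q3 Defs.oa Defs.ob osum emulS P7 Nat.ltb Nat.leb andb omul oadd oopp osub oscale of_coords mkoct oIm qmul qadd qopp qconj oreal coord Nat.eqb].
  Time (f_equal; f_equal; ring).
Qed.
Definition Pform (I Q G : oct) (n : nat) : oct :=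
  oadd (oscale (coord I n) Q) (omul (osub (oscale (Nexp I) (ebasis n)) (oscale (coord I n) I)) G).
Ltac bigcbv := cbv beta iota zeta delta [Defs.q0 Defs.q1 Defs.q2 Defs.q3 Defs.oa Defs.ob osum emulS P7 Nat.ltb Nat.leb andb omul oadd oopp osub oscale of_coords mkoct oIm qmul qadd qopp qconj oreal coord Nat.eqb Pform Nexp ebasis SEE SX].
Lemma SEE_Pform I Q G : coord I 0 = 0 ->
  SEE (Pform I Q G) = oadd (omul I Q) (oscale (-6 * Nexp I) G).
Proof.
  intro H0. dest8 I. simpl in H0. subst. dest8 Q. dest8 G.
  Time bigcbv. Time (f_equal; f_equal; ring).
Qed.
Lemma SX_Pform I Q G a b : coord I 0 = 0 ->
  SX (Pform I Q G) (oadd (oreal a) (oscale b I)) = oscale (b * Nexp I) Q.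
Proof.
  intro H0. dest8 I. simpl in H0. subst. dest8 Q. dest8 G.
  Time bigcbv. Time (f_equal; f_equal; ring).
Qed.
Lemma final_alg I Q G a b : coord I 0 = 0 ->
  oopp (oadd (omul (oIm (oadd (oreal a) (oscale b I))) (oadd (omul I Q) (oscale (-6 * Nexp I) G)))
     (oscale (b * Nexp I) Q)) = oscale (6 * b * Nexp I) (omul I G).
Proof.
  intro H0. dest8 I. simpl in H0. subst. dest8 Q. dest8 G.
  Time bigcbv. Time (f_equal; f_equal; ring).
Qed.
Lemma GammaP_Pform I Q G a b : coord I 0 = 0 ->
  GammaP (Pform I Q G) (oadd (oreal a) (oscale b I)) = oscale (6 * b * Nexp I) (omul I G).
Proof.
  intro H0. rewrite GammaPE.
  change (GammaE (Pform I Q G)) with (GammaE (let P := Pform I Q G in P7 (P 1%nat) (P 2%nat) (P 3%nat) (P 4%nat) (P 5%nat) (P 6%nat) (P 7%nat))).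
  rewrite stage1.
  change (SEE (P7 _ _ _ _ _ _ _)) with (SEE (Pform I Q G)).
  change (SX (P7 _ _ _ _ _ _ _)) with (SX (Pform I Q G)).
  rewrite SEE_Pform, SX_Pform by exact H0. apply final_alg; exact H0.
Qed.

Lemma GammaP_ext P P' x : (forall n, (1 <= n <= 7)%nat -> P n = P' n) -> GammaP P x = GammaP P' x.
Proof.
  intro H. unfold GammaP. f_equal. apply osum_ext; intros m Hm. apply osum_ext; intros n Hn.
  destruct (Nat.ltb_spec 0 m); destruct (Nat.ltb_spec m n); simpl; auto.
  rewrite (H n), (H m) by lia. reflexivity.
Qed.

Theorem lemma2p12 (D : R -> R -> Prop) (f : oct -> oct) :
  (exists a b, D a b) -> openR2 D -> (forall a b, D a b -> D a (- b)) ->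
  connectedO (OmegaD D) ->
  is_slice D f -> C1_on (OmegaD D) f ->
  forall F1 F2 : R -> R -> oct, stem_of D f F1 F2 ->
  forall (a b : R) (I : oct), D a b -> sphereS I -> b <> 0 ->
    let x := oadd (oreal a) (oscale b I) in
    oscale (/ b) (F2 a b) = oscale (/ 6) (omul (oinv (oIm x)) (Gamma f x)).
Proof.
  intros _ Hop Hsym _ _ [Hex Hcont] F1 F2 Hstem a b I HD HI Hb x.
  destruct (sphere_inv I HI) as [HI0 HN].
  destruct (ball_lemma D a b I Hop Hsym HD HI0 HN Hb) as [d0 [Hd0 Hball]].
  fold x in Hball.
  assert (Hx : OmegaD D x) by (apply Hball; rewrite l1d_self; lra).
  assert (Hdiff : forall k, (k < 8)%nat -> forall eps, 0 < eps -> exists d, 0 < d /\ forall y, l1d y x < d ->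
    Rabs (coord (f y) k - coord (f x) k
       - rsum 8 (fun h => (coord y h - coord x h) * dpart (fun y => coord (f y) k) h x))
      <= eps * l1d y x).
  { intros k Hk. apply (diff_est (fun y => coord (f y) k) x (OmegaD D) d0 Hd0 Hball).
    - intros y h Hy Hh. apply Hex; auto.
    - intros h Hh eps Heps. destruct (Hcont h Hh x Hx eps Heps) as [dl [Hdl Hc]].
      exists dl. split; auto. intros y Hy Hyl.
      rewrite !dpart_opartial by auto. rewrite <- coord_osub.
      eapply Rle_lt_trans. apply coord_le_onorm; auto. apply Hc; auto.
      eapply Rle_lt_trans. apply onorm_l1. exact Hyl. }
  set (Q := of_coords (fun k => rsum 8 (fun h => coord I h * coord (opartial h f x) k))).
  set (G := oscale (/ b) (F2 a b)).
  assert (HP : forall n, (1 <= n <= 7)%nat -> opartial n f x = Pform I Q G n).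
  { intros n Hn. apply oct_ext. intros k Hk.
    set (w := osub (oscale (Nexp I) (ebasis n)) (oscale (coord I n) I)).
    assert (Hw : forall h, (h < 8)%nat -> coord w h = Nexp I * (if Nat.eqb h n then 1 else 0) - coord I n * coord I h).
    { intros h Hh. unfold w. rewrite coord_osub, !coord_oscale, coord_ebasis by auto. reflexivity. }
    assert (HsI : rsum 8 (fun h => coord I h * coord I h) = Nexp I).
    { cbn [rsum]. unfold Nexp. rewrite HI0. ring. }
    assert (Hkey := key D f F1 F2 a b I w k Hstem HD HI0 HN).
    fold x in Hkey.
    assert (Hw0 : coord w 0 = 0).
    { rewrite Hw by lia. destruct (Nat.eqb_spec 0 n); try lia. rewrite HI0. ring. }
    assert (Horth : rsum 8 (fun h => coord w h * coord I h) = 0).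
    { rewrite (rsum_ext 8 _ (fun h => Nexp I * ((if Nat.eqb h n then 1 else 0) * coord I h) - coord I n * (coord I h * coord I h)))
        by (intros h Hh; rewrite Hw by auto; ring).
      rewrite rsum_minus, !rsum_scal, rsum_delta, HsI.
      destruct (Nat.ltb_spec n 8); try lia. ring. }
    specialize (Hkey Hw0 Horth Hk (Hdiff k Hk)).
    rewrite (rsum_ext 8 _ (fun h => Nexp I * ((if Nat.eqb h n then 1 else 0) * coord (opartial h f x) k)
                   - coord I n * (coord I h * coord (opartial h f x) k))) in Hkey
      by (intros h Hh; rewrite Hw, dpart_opartial by auto; ring).
    rewrite rsum_minus, !rsum_scal, rsum_delta in Hkey.
    destruct (Nat.ltb_spec n 8); try lia.
    unfold Pform. fold w. rewrite coord_oadd, !coord_oscale. unfold G. rewrite omul_scal_r, coord_oscale.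
    rewrite <- Hkey. unfold Q. rewrite coord_of_coords by auto. rewrite HN. field. auto. }
  change (Gamma f x) with (GammaP (fun n => opartial n f x) x).
  rewrite (GammaP_ext _ (Pform I Q G) x HP).
  unfold x. rewrite GammaP_Pform by auto.
  unfold G. apply final_step; auto.
Qed.
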